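(* If $\bm{\Omega}$ is positive definite, then a normal mode transformation exists.
   Context: Fix an integer $N\ge 1$, real numbers $v$ with $|v|<1$, $L>0$, $L_{\star}\ge 0$, an integer $M\ge 1$ and real coefficients $c_{1}=1,c_{2},\dots,c_{M}$. Let $F(k)=\sum_{i=1}^{M}(-1)^{i-1}c_{i}L_{\star}^{2i-2}k^{2i-1}$ and $k_{n}=n\pi/L$, and assume $F(k_{n})^{2}\neq v^{2}k_{n}^{2}$ for $n=1,\dots,N$. Put $u_{n}=\sqrt{|F(k_{n})^{2}-v^{2}k_{n}^{2}|}/k_{n}>0$, and $\varepsilon_{n}=1$ if $F(k_{n})^{2}-v^{2}k_{n}^{2}>0$, $\varepsilon_{n}=0$ otherwise. Define $N\times N$ matrices $\bm\sigma,\bm\rho,\bm\xi$ by $\sigma_{nn}=0$, $\sigma_{nm}=\dfrac{2iv\sqrt{nm}\,[1-(-1)^{n+m}]}{\pi\sqrt{u_{n}u_{m}}\,(m^{2}-n^{2})}$ for $n\neq m$, $\bm\rho=\mathrm{diag}(n u_{n}\varepsilon_{n})$, $\bm\xi=\mathrm{diag}(-n u_{n}(1-\varepsilon_{n}))$. With $\mathbf{I}$ the $N\times N$ identity, define the $2N\times 2N$ matrices $\bm{\Sigma}=\begin{pmatrix}\mathbf{I}&\mathbf{0}\\ \mathbf{0}&-\mathbf{I}\end{pmatrix}$, $\bm{\Gamma}=\begin{pmatrix}\mathbf{0}&\mathbf{I}\\ \mathbf{I}&\mathbf{0}\end{pmatrix}$, $\mathbf{R}=\bm{\Sigma}-\begin{pmatrix}\bm\sigma&\bm\sigma\\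 \bm\sigma&\bm\sigma\end{pmatrix}$, $\bm{\Omega}=\begin{pmatrix}\bm\rho&\bm\xi\\ \bm\xi&\bm\rho\end{pmatrix}$. Standing assumption: $\mathbf{R}$ is invertible. Let $\mathbf{D}=\mathbf{R}^{-1}\bm{\Omega}$. Here ${}^{*}$ denotes entrywise complex conjugation and ${}^{\mathrm{H}}$ the conjugate transpose. A normal mode transformation is a $2N\times2N$ matrix $\mathbf{T}$ such that (i) $\mathbf{T}^{\mathrm{H}}\mathbf{R}\mathbf{T}=\bm{\Sigma}$; (ii) $\mathbf{T}=\bm{\Gamma}\mathbf{T}^{*}\bm{\Gamma}$; (iii) $\mathbf{T}^{-1}\mathbf{D}\mathbf{T}=\mathrm{diag}(\mu_{1},\dots,\mu_{N},-\mu_{1},\dots,-\mu_{N})$ for some real numbers $\mu_{n}>0$, where $\mathbf{T}^{-1}=\bm{\Sigma}\mathbf{T}^{\mathrm{H}}\mathbf{R}$. *)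

(* Defs.v *)
From HB Require Import structures.
From mathcomp Require Import all_boot all_order all_algebra.
From mathcomp Require Import all_classical all_reals all_analysis.
From mathcomp Require Import complex.
Unset Printing Implicit Defensive.
Import Order.TTheory GRing.Theory Num.Theory.
Local Open Scope ring_scope.
Local Open Scope complex_scope.

Section NormalModes.
Context {R : realType}.
Local Notation C := (R[i]).

Definition mxconj {m n} (A : 'M[C]_(m, n)) : 'M[C]_(m, n) := map_mx Num.conj A.
Definition mxH {m n} (A : 'M[C]_(m, n)) : 'M[C]_(n, m) := (mxconj A)^T.

Definition Fdisp (M : nat) (c : nat -> R) (Ls k : R) : R :=
  \sum_(1 <= i < M.+1) (-1) ^+ (i.-1) * c i * Ls ^+ (2 * i - 2)%N * k ^+ (2 * i - 1)%N.

(* k_n = n pi / L ; indices i : 'I_N stand for n = i+1 *)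
Definition kn (L : R) (n : nat) : R := n%:R * pi / L.

Definition discr M c Ls v L (n : nat) : R :=
  Fdisp M c Ls (kn L n) ^+ 2 - v ^+ 2 * kn L n ^+ 2.

Definition un M c Ls v L (n : nat) : R := Num.sqrt `|discr M c Ls v L n| / kn L n.

Definition epsn M c Ls v L (n : nat) : R := if 0 < discr M c Ls v L n then 1 else 0.

Definition sigma_mx N M c Ls v L : 'M[C]_N :=
  \matrix_(i, j)
    if i == j then 0 else
    let n := (i : nat).+1 in let m := (j : nat).+1 in
    'i * ((2 * v * Num.sqrt (n%:R * m%:R) * (1 - (-1) ^+ (n + m)))
          / (pi * Num.sqrt (un M c Ls v L n * un M c Ls v L m)
             * (m%:R ^+ 2 - n%:R ^+ 2)))%:C.

Definition rho_mx N M c Ls v L : 'M[C]_N :=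
  diag_mx (\row_(i < N) (((i : nat).+1%:R * un M c Ls v L (i : nat).+1
                           * epsn M c Ls v L (i : nat).+1)%:C)).

Definition xi_mx N M c Ls v L : 'M[C]_N :=
  diag_mx (\row_(i < N) ((- ((i : nat).+1%:R * un M c Ls v L (i : nat).+1
                           * (1 - epsn M c Ls v L (i : nat).+1)))%:C)).

Definition Sigma_mx N : 'M[C]_(N + N) := block_mx 1%:M 0 0 (- 1%:M).
Definition Gamma_mx N : 'M[C]_(N + N) := block_mx 0 1%:M 1%:M 0.

Definition R_mx N M c Ls v L : 'M[C]_(N + N) :=
  Sigma_mx N - block_mx (sigma_mx N M c Ls v L) (sigma_mx N M c Ls v L)
                        (sigma_mx N M c Ls v L) (sigma_mx N M c Ls v L).

Definition Omega_mx N M c Ls v L : 'M[C]_(N + N) :=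
  block_mx (rho_mx N M c Ls v L) (xi_mx N M c Ls v L)
           (xi_mx N M c Ls v L) (rho_mx N M c Ls v L).

Definition D_mx N M c Ls v L : 'M[C]_(N + N) :=
  invmx (R_mx N M c Ls v L) *m Omega_mx N M c Ls v L.

Definition posdef {n} (A : 'M[C]_n) : Prop :=
  mxH A = A /\ forall x : 'cV[C]_n, x != 0 -> 0 < (mxH x *m A *m x) 0 0.

Definition normal_mode_transformation N M c Ls v L (T : 'M[C]_(N + N)) : Prop :=
  [/\ mxH T *m R_mx N M c Ls v L *m T = Sigma_mx N,
      T = Gamma_mx N *m mxconj T *m Gamma_mx N &
      exists mu : 'I_N -> R, (forall i, 0 < mu i) /\
        (Sigma_mx N *m mxH T *m R_mx N M c Ls v L) *m D_mx N M c Ls v L *m T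
        = diag_mx (row_mx (\row_(i < N) (mu i)%:C) (\row_(i < N) (- mu i)%:C))].

End NormalModes.

(* Main.v *)
Require Import Defs.
From HB Require Import structures.
From mathcomp Require Import all_boot all_order all_algebra.
From mathcomp Require Import all_classical all_reals all_analysis.
From mathcomp Require Import complex.
From mathcomp Require Import sesquilinear spectral.
From mathcomp Require Import zify.
Import Order.TTheory GRing.Theory Num.Theory Num.Def.
Local Open Scope ring_scope.
Local Open Scope sesquilinear_scope.
Local Notation cj := (map_mx conjC).
Section Gen.
Context {C : numClosedFieldType}.

Lemma ctM m n p (A : 'M[C]_(m, n)) (B : 'M[C]_(n, p)) : (A *m B)^t* = B^t* *m A^t*.
Proof. by rewrite trmx_mul map_mxM. Qed.

Lemma cjK m n (A : 'M[C]_(m, n)) : cj (cj A) = A.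
Proof. by apply/matrixP => i j; rewrite !mxE conjCK. Qed.

Lemma ctN m n (A : 'M[C]_(m, n)) : (- A)^t* = - A^t*.
Proof. by apply/matrixP => i j; rewrite !mxE rmorphN. Qed.

Lemma ct_cj m n (A : 'M[C]_(m, n)) : (cj A)^t* = A^T.
Proof. by apply/matrixP => i j; rewrite !mxE conjCK. Qed.

Lemma cj_ct m n (A : 'M[C]_(m, n)) : cj (A^t*) = A^T.
Proof. by apply/matrixP => i j; rewrite !mxE conjCK. Qed.

Lemma cjN m n (A : 'M[C]_(m, n)) : cj (- A) = - cj A.
Proof. by apply/matrixP => i j; rewrite !mxE rmorphN. Qed.

Lemma cjD m n (A B : 'M[C]_(m, n)) : cj (A + B) = cj A + cj B.
Proof. by apply/matrixP => i j; rewrite !mxE rmorphD. Qed.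

Lemma ct1 n : (1%:M : 'M[C]_n)^t* = 1%:M.
Proof. by rewrite trmx1 map_mx1. Qed.

Variable N : nat.

Definition Gam : 'M[C]_(N + N) := block_mx 0 1%:M 1%:M 0.
Definition Sig : 'M[C]_(N + N) := block_mx 1%:M 0 0 (- 1%:M).

Lemma GamGam : Gam *m Gam = 1%:M.
Proof.
by rewrite /Gam mulmx_block !mul0mx !mulmx0 !mul1mx !add0r !addr0 -scalar_mx_block.
Qed.

Lemma Gam_cj : cj Gam = Gam.
Proof. by rewrite /Gam map_block_mx map_mx0 map_mx1. Qed.

Lemma Gam_ct : Gam^t* = Gam.
Proof. by rewrite /Gam tr_block_mx trmx0 trmx1 map_block_mx map_mx0 map_mx1. Qed.

Lemma Gam_col m (A B : 'M[C]_(N, m)) : Gam *m col_mx A B = col_mx B A.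
Proof. by rewrite /Gam mul_block_col !mul0mx !mul1mx add0r addr0. Qed.

Lemma Gam_diag (a b : 'rV[C]_N) :
  Gam *m diag_mx (row_mx a b) *m Gam = diag_mx (row_mx b a).
Proof.
rewrite !diag_mx_row /Gam !mulmx_block !mul0mx !mulmx0 !mul1mx !mulmx1.
by rewrite !add0r !addr0 ?mul0mx ?mulmx0 ?mul1mx ?mulmx1 ?add0r ?addr0.
Qed.

Lemma Gam_blk (s : 'M[C]_N) :
  Gam *m block_mx s s s s *m Gam = block_mx s s s s.
Proof.
rewrite /Gam !mulmx_block !mul0mx !mulmx0 !mul1mx !mulmx1.
by rewrite !add0r !addr0 ?mul0mx ?mulmx0 ?mul1mx ?mulmx1 ?add0r ?addr0.
Qed.

End Gen.

Section Helpers.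
Context {C : numClosedFieldType}.

Lemma rowsub_unit m n (g : 'I_m -> 'I_n) (P : 'M[C]_n) :
  injective g -> P *m P^t* = 1%:M -> rowsub g P *m (rowsub g P)^t* = 1%:M.
Proof.
move=> ginj hP; apply/matrixP => i j.
have := congr1 (fun M : 'M[C]_n => M (g i) (g j)) hP.
rewrite /= !mxE (inj_eq ginj) => <-.
by apply: eq_bigr => k _; rewrite !mxE.
Qed.

Lemma rowsub_eig m n (g : 'I_m -> 'I_n) (P H : 'M[C]_n) (d : 'rV[C]_n) :
  P *m H = diag_mx d *m P ->
  rowsub g P *m H = diag_mx (\row_i d 0 (g i)) *m rowsub g P.
Proof.
move=> hPH; apply/matrixP => i j.
have := congr1 (fun M : 'M[C]_n => M (g i) j) hPH.
rewrite !mul_diag_mx !mxE => <-.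
by apply: eq_bigr => k _; rewrite !mxE.
Qed.

Lemma quad_ge0 m (lam a : 'rV[C]_m) : (forall i, 0 < lam 0 i) ->
  0 <= (a *m diag_mx lam *m a^t*) 0 0.
Proof.
move=> hl; rewrite mxE sumr_ge0 // => k _.
rewrite mul_mx_diag !mxE -mulrA mulrC -mulrA mulr_ge0 ?mul_conjC_ge0 //.
  by rewrite ltW.
by rewrite mulrC mul_conjC_ge0.
Qed.

Lemma quad_eq0 m (lam a : 'rV[C]_m) : (forall i, 0 < lam 0 i) ->
  (a *m diag_mx lam *m a^t*) 0 0 = 0 -> a = 0.
Proof.
move=> hl; rewrite mxE => /psumr_eq0P h.
have hge : forall i, true -> 0 <= (a *m diag_mx lam) 0 i * (a^t*) i 0.
  move=> i _; rewrite mul_mx_diag !mxE -mulrA mulrC -mulrA mulr_ge0 //.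
    exact: ltW.
  by rewrite mulrC mul_conjC_ge0.
apply/rowP => k; rewrite mxE.
have := h hge k isT; rewrite mul_mx_diag !mxE.
rewrite -mulrA mulrC -mulrA => /eqP; rewrite mulf_eq0 mulrC mul_conjC_eq0.
by rewrite gt_eqF ?hl //= => /eqP.
Qed.

Lemma orth_eig p q n (X : 'M[C]_(p, n)) (Y : 'M[C]_(q, n)) (H : 'M[C]_n)
   (al : 'rV[C]_p) (be : 'rV[C]_q) :
  H^t* = H -> X *m H = diag_mx al *m X -> Y *m H = diag_mx be *m Y ->
  (forall i j, al 0 i != (be 0 j)^*) -> X *m Y^t* = 0.
Proof.
move=> hH hX hY hne.
have e1 : X *m H *m Y^t* = diag_mx al *m (X *m Y^t*) by rewrite hX mulmxA.
have e2 : X *m H *m Y^t* = (X *m Y^t*) *m diag_mx (map_mx conjC be).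
  by rewrite -mulmxA -{1}hH -ctM hY ctM mulmxA tr_diag_mx map_diag_mx.
apply/matrixP => i j; rewrite mxE.
have := congr1 (fun M : 'M[C]_(p, q) => M i j) (etrans (esym e1) e2).
rewrite mul_diag_mx mul_mx_diag !mxE => /eqP.
rewrite [X in X == _]mulrC -subr_eq0 -mulrBr mulf_eq0 subr_eq0 (negbTE (hne i j)) orbF.
by move/eqP.
Qed.

End Helpers.

Section Core.
Context {C : numClosedFieldType} (N : nat).
Local Notation Gam := (@Gam C N).

Lemma diag_mxN n (a : 'rV[C]_n) : diag_mx (- a) = - diag_mx a.
Proof. by apply/matrixP => i j; rewrite !mxE mulNrn. Qed.

Lemma cj_pos n (a : 'rV[C]_n) : (forall i, 0 < a 0 i) -> cj a = a.
Proof. by move=> h; apply/rowP => i; rewrite !mxE geC0_conj // ltW. Qed.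

Lemma GamH (H : 'M[C]_(N + N)) : Gam *m cj H *m Gam = - H ->
  Gam *m H = - (cj H *m Gam).
Proof.
move=> h; have h2 : Gam *m H *m Gam = - cj H.
  by rewrite -cjN -h !map_mxM Gam_cj cjK.
by rewrite -mulNmx -h2 -[_ *m Gam *m Gam]mulmxA GamGam mulmx1.
Qed.

Lemma pack m (g : 'I_m -> 'I_(N + N)) (H P : 'M[C]_(N + N)) (d : 'rV[C]_(N + N)) :
  injective g -> (forall i, 0 < d 0 (g i)) ->
  P *m P^t* = 1%:M -> P *m H = diag_mx d *m P -> H^t* = H ->
  Gam *m cj H *m Gam = - H ->
  let E := rowsub g P in let F := cj E *m Gam in let lam := \row_i d 0 (g i) in
  [/\ E *m E^t* = 1%:M, F *m F^t* = 1%:M, E *m H = diag_mx lam *m E,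
      F *m H = diag_mx (- lam) *m F & E *m F^t* = 0].
Proof.
move=> ginj hpos hP hPH hH hG E F lam.
have hl : forall i, 0 < lam 0 i by move=> i; rewrite mxE.
have hE : E *m E^t* = 1%:M by exact: rowsub_unit.
have Fct : F^t* = Gam *m E^T by rewrite ctM Gam_ct ct_cj.
have hF : F *m F^t* = 1%:M.
  rewrite Fct /F mulmxA -[cj E *m Gam *m Gam]mulmxA GamGam mulmx1.
  by rewrite -cj_ct -map_mxM hE map_mx1.
have EH : E *m H = diag_mx lam *m E by exact: rowsub_eig.
have FH : F *m H = diag_mx (- lam) *m F.
  rewrite /F -mulmxA GamH // mulmxN !mulmxA -map_mxM EH map_mxM map_diag_mx.
  by rewrite cj_pos // diag_mxN !mulNmx.
split => //.
apply: (@orth_eig C _ _ _ _ _ _ _ _ hH EH FH) => i j. rewrite !mxE. rewrite rmorphN /= geC0_conj; last first.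
  by rewrite ltW.
apply/negP => /eqP e; have := hpos i; rewrite e oppr_gt0.
by move=> /lt_trans /(_ (hpos j)); rewrite ltxx.
Qed.


Lemma sandwich p (X : 'M[C]_(p, N + N)) (H : 'M[C]_(N + N)) (l : 'rV[C]_p) (a : 'rV[C]_p) :
  X *m H = diag_mx l *m X -> X *m X^t* = 1%:M ->
  (a *m X) *m H *m (a *m X)^t* = a *m diag_mx l *m a^t*.
Proof.
move=> hX hXX.
by rewrite ctM -(mulmxA a X H) hX !mulmxA -(mulmxA _ X) hXX mulmx1.
Qed.

Lemma count_le (H P : 'M[C]_(N + N)) (d : 'rV[C]_(N + N)) :
  P *m P^t* = 1%:M -> P *m H = diag_mx d *m P -> H^t* = H ->
  Gam *m cj H *m Gam = - H ->
  (#|[set k | (0 < d 0 k)%R]| <= N)%N.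
Proof.
move=> hP hPH hH hG.
set S := [set k | 0 < d 0 k].
pose g : 'I_#|S| -> 'I_(N + N) := enum_val.
have ginj : injective g := enum_val_inj.
have gpos : forall i, 0 < d 0 (g i) by move=> i; have := enum_valP i; rewrite inE.
have [hE hF EH FH EF] := @pack _ _ _ _ _ ginj gpos hP hPH hH hG.
set E := rowsub g P in hE hF EH FH EF.
set F := cj E *m Gam in hF FH EF.
set lam := \row_i d 0 (g i) in EH FH.
have hl : forall i, 0 < lam 0 i by move=> i; rewrite mxE.
have key : forall x : 'rV_(N + N), (x <= E)%MS -> (x <= F)%MS -> x = 0.
  move=> x /submxP [a ->] /submxP [b eb].
  have qa := @sandwich _ _ _ _ a EH hE.
  have qb := @sandwich _ _ _ _ b FH hF.
  rewrite eb in qa; rewrite qa diag_mxN mulmxN mulNmx in qb.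
  have e : (a *m diag_mx lam *m a^t*) 0 0 = - (b *m diag_mx lam *m b^t*) 0 0.
    by rewrite qb !mxE.
  have ha := @quad_ge0 C _ lam a hl; have hb := @quad_ge0 C _ lam b hl.
  have ha0 : (a *m diag_mx lam *m a^t*) 0 0 = 0.
    apply/le_anti; rewrite ha andbT e oppr_le0 //.
  by rewrite (@quad_eq0 C _ lam a hl ha0) mul0mx.
have Z0 : (E :&: F)%MS = 0.
  apply/row_matrixP => i; rewrite row0; apply: key.
    exact: submx_trans (row_sub _ _) (capmxSl _ _).
  exact: submx_trans (row_sub _ _) (capmxSr _ _).
have := mxrank_sum_cap E F; rewrite Z0 mxrank0 addn0.
have rE : \rank E = #|S| by apply: mxrank_unitary; apply/unitarymxP.
have rF : \rank F = #|S| by apply: mxrank_unitary; apply/unitarymxP.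
rewrite rE rF.
have := rank_leq_col (E + F)%MS.
lia.
Qed.


Lemma core (H : 'M[C]_(N + N)) : H^t* = H -> H \in unitmx ->
  Gam *m cj H *m Gam = - H ->
  exists (V : 'M[C]_(N + N)) (lam : 'rV[C]_N),
    [/\ (forall i, 0 < lam 0 i), V *m V^t* = 1%:M, V = Gam *m cj V *m Gam &
        V *m H *m V^t* = diag_mx (row_mx lam (- lam))].
Proof.
move=> hH hU hG.
have Hherm : H \is hermsymmx.
  by apply/is_hermitianmxP; rewrite expr0 scale1r hH.
set P := spectralmx H; set d := spectral_diag H.
have Pu : P \is unitarymx := spectral_unitarymx H.
have hP : P *m P^t* = 1%:M by apply/unitarymxP.
have /orthomx_spectralP Hsp := hermitian_normalmx Hherm.
rewrite -/P -/d invmx_unitary // in Hsp.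
have hPH : P *m H = diag_mx d *m P by rewrite {1}Hsp !mulmxA hP mul1mx.
have dreal : forall k, d 0 k \is Num.real.
  by move=> k; have /mxOverP := hermitian_spectral_diag_real Hherm; apply.
have dnz : forall k, d 0 k != 0.
  move=> k; apply/negP => /eqP dk.
  have : row k P *m H = 0.
    rewrite -row_mul hPH mul_diag_mx; apply/rowP => j; rewrite !mxE dk mul0r.
    by [].
  move=> /(congr1 (mulmx^~ (invmx H))); rewrite /= mulmxK // mul0mx => rk0.
  have := congr1 (fun M : 'M[C]_(N + N) => M k k) hP.
  rewrite [in RHS]mxE eqxx /= mxE big1 => [/eqP|j _].
    by rewrite eq_sym oner_eq0.
  have := congr1 (fun M : 'M[C]_(1, N + N) => M 0 j) rk0.
  by rewrite !mxE => ->; rewrite mul0r.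
have cnt1 := @count_le H P d hP hPH hH hG.
have cnt2 := @count_le (- H) P (- d) hP.
have {cnt2} cnt2 : (#|[set k | (0 < (- d) 0 k)%R]| <= N)%N.
  apply: cnt2.
  - by rewrite mulmxN hPH diag_mxN mulNmx.
  - by rewrite ctN hH.
  - by rewrite cjN mulmxN mulNmx hG.
have Sc : [set k | (0 < (- d) 0 k)%R] = ~: [set k | (0 < d 0 k)%R].
  apply/setP => k; rewrite !inE mxE oppr_gt0 real_ltNge ?real0 //.
  by rewrite le_eqVlt eq_sym (negbTE (dnz k)).
have cardN : #|[set k | (0 < d 0 k)%R]| = N.
  have := cardsC [set k | (0 < d 0 k)%R]; rewrite -Sc card_ord.
  move: cnt1 cnt2; set a := #|_|; set b := #|_|; lia.
pose g : 'I_N -> 'I_(N + N) := fun i => enum_val (cast_ord (esym cardN) i).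
have ginj : injective g by move=> i j /enum_val_inj /cast_ord_inj.
have gpos : forall i, 0 < d 0 (g i).
  by move=> i; have := enum_valP (cast_ord (esym cardN) i); rewrite inE.
have [hE hF EH FH EF] := @pack _ _ _ _ _ ginj gpos hP hPH hH hG.
set E := rowsub g P in hE hF EH FH EF.
set F := cj E *m Gam in hF FH EF.
set lam := \row_i d 0 (g i) in EH FH.
have hl : forall i, 0 < lam 0 i by move=> i; rewrite mxE.
have FE : F *m E^t* = 0.
  by rewrite -[F]trmxCK -ctM EF trmx0 map_mx0.
have Vct : (col_mx E F)^t* = row_mx (E^t*) (F^t*) by rewrite tr_col_mx map_row_mx.
exists (col_mx E F), lam; split => //.
- by rewrite Vct mul_col_row hE hF EF FE -scalar_mx_block.
- have cjF : cj F = E *m Gam by rewrite /F map_mxM cjK Gam_cj.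
  by rewrite map_col_mx cjF Gam_col mul_col_mx -mulmxA GamGam mulmx1.
- rewrite Vct mul_col_mx mul_col_row EH FH.
  rewrite -[diag_mx lam *m E *m _]mulmxA -[diag_mx lam *m E *m _]mulmxA.
  rewrite -[diag_mx (- lam) *m F *m _]mulmxA -[diag_mx (- lam) *m F *m _]mulmxA.
  rewrite hE hF EF FE !mulmx0 !mulmx1.
  by rewrite diag_mx_row.
Qed.

End Core.

Section Assemble.
Context {C : numClosedFieldType} (N : nat).
Local Notation Gam := (@Gam C N).
Local Notation Sig := (@Sig C N).

Lemma diagM n (a c : 'rV[C]_n) :
  diag_mx a *m diag_mx c = diag_mx (\row_k (a 0 k * c 0 k)).
Proof. by apply/matrixP => i j; rewrite mul_diag_mx !mxE mulrnAr. Qed.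

Lemma diag_row_mul (a b c e : 'rV[C]_N) :
  diag_mx (row_mx a b) *m diag_mx (row_mx c e) =
  diag_mx (row_mx (\row_k (a 0 k * c 0 k)) (\row_k (b 0 k * e 0 k))).
Proof.
rewrite !diag_mx_row mulmx_block !mulmx0 !mul0mx !addr0 !add0r !diagM.
by [].
Qed.

Lemma SigE : Sig = diag_mx (row_mx (\row_(k < N) 1) (\row_(k < N) -1)).
Proof.
rewrite diag_mx_row /Sig; congr block_mx.
  by apply/matrixP => i j; rewrite !mxE.
by apply/matrixP => i j; rewrite !mxE mulNrn.
Qed.

Lemma Gcomm (a : 'rV[C]_N) : Gam *m diag_mx (row_mx a a) = diag_mx (row_mx a a) *m Gam.
Proof.
by rewrite -{2}(Gam_diag _ a a) -!mulmxA GamGam mulmx1.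
Qed.

Lemma conj3 (A B X : 'M[C]_(N + N)) : Gam *m A = A *m Gam -> Gam *m B = B *m Gam ->
  Gam *m (A *m X *m B) *m Gam = A *m (Gam *m X *m Gam) *m B.
Proof.
move=> hA hB.
by rewrite !mulmxA hA -!mulmxA hB.
Qed.

Lemma dpos_cj (a : 'rV[C]_N) : (forall i, 0 < a 0 i) ->
  cj (diag_mx (row_mx a a)) = diag_mx (row_mx a a).
Proof. by move=> h; rewrite map_diag_mx map_row_mx cj_pos. Qed.

Lemma dpos_ct (a : 'rV[C]_N) : (forall i, 0 < a 0 i) ->
  (diag_mx (row_mx a a))^t* = diag_mx (row_mx a a).
Proof. by move=> h; rewrite tr_diag_mx dpos_cj. Qed.

Lemma sqrt_id (x : C) : 0 < x -> (sqrtC x)^-1 * x * (sqrtC x)^-1 = 1.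
Proof.
move=> hx; have s0 : sqrtC x != 0 by rewrite sqrtC_eq0 gt_eqF.
by rewrite -{2}(sqrtCK x) expr2 mulrA mulVf // mul1r mulfV.
Qed.

Lemma sqrt_inv2 (x : C) : 0 < x -> (sqrtC x)^-1 * (sqrtC x)^-1 = x^-1.
Proof. by move=> hx; rewrite -invfM -expr2 sqrtCK. Qed.

Lemma assemble (Rm : 'M[C]_(N + N)) (r : 'rV[C]_N) :
  (forall i, 0 < r 0 i) -> Rm^t* = Rm -> Rm \in unitmx ->
  Gam *m cj Rm *m Gam = - Rm ->
  exists T : 'M[C]_(N + N), exists mu : 'rV[C]_N, (forall i, 0 < mu 0 i) /\
   [/\ T^t* *m Rm *m T = Sig, T = Gam *m cj T *m Gam &
       Sig *m T^t* *m Rm *m (invmx Rm *m block_mx (diag_mx r) 0 0 (diag_mx r)) *m T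
       = diag_mx (row_mx mu (- mu))].
Proof.
move=> hr hR hRU hG.
pose w := \row_i (sqrtC (r 0 i))^-1.
have wpos : forall i, 0 < w 0 i by move=> i; rewrite mxE invr_gt0 sqrtC_gt0.
pose Wi := diag_mx (row_mx w w).
have WiU : Wi \in unitmx.
  pose s := \row_i sqrtC (r 0 i).
  have : Wi *m diag_mx (row_mx s s) = 1%:M.
    rewrite /Wi diag_row_mul.
    have -> : \row_k (w 0 k * s 0 k) = const_mx 1.
      apply/rowP => k; rewrite !mxE mulVf // sqrtC_eq0 gt_eqF //.
    by rewrite row_mx_const diag_const_mx.
  by case/mulmx1_unit.
pose Hm := Wi *m Rm *m Wi.
have hH : Hm^t* = Hm by rewrite /Hm !ctM dpos_ct // hR mulmxA.
have hHU : Hm \in unitmx by rewrite /Hm !unitmx_mul WiU hRU.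
have hHG : Gam *m cj Hm *m Gam = - Hm.
  rewrite /Hm !map_mxM dpos_cj // conj3 ?Gcomm // hG.
  by rewrite mulmxN mulNmx.
have [V [lam [hl hVV hVs hVH]]] := @core _ N Hm hH hHU hHG.
pose e := \row_i (sqrtC (lam 0 i))^-1.
have epos : forall i, 0 < e 0 i by move=> i; rewrite mxE invr_gt0 sqrtC_gt0.
pose Dg := diag_mx (row_mx e e).
pose T := Wi *m V^t* *m Dg.
have Tct : T^t* = Dg *m V *m Wi by rewrite /T !ctM trmxCK !dpos_ct // mulmxA.
exists T, (\row_i (lam 0 i)^-1); split.
  by move=> i; rewrite mxE invr_gt0.
split.
- rewrite Tct /T.
  have -> : Dg *m V *m Wi *m Rm *m (Wi *m V^t* *m Dg) = Dg *m (V *m Hm *m V^t*) *m Dg.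
    by rewrite /Hm !mulmxA.
  rewrite hVH /Dg !diag_row_mul SigE; congr (diag_mx (row_mx _ _)).
    by apply/rowP => k; rewrite !mxE sqrt_id.
  by apply/rowP => k; rewrite !mxE mulrN mulNr sqrt_id.
- have hVt : Gam *m V^T *m Gam = V^t*.
    by rewrite {2}hVs !ctM Gam_ct ct_cj mulmxA.
  rewrite /T !map_mxM cj_ct dpos_cj // dpos_cj // conj3 ?Gcomm //.
  by rewrite hVt.
- rewrite -[Sig *m T^t* *m Rm *m _]mulmxA mulKVmx //.
  rewrite -diag_mx_row Tct /T.
  have -> : Sig *m (Dg *m V *m Wi) *m diag_mx (row_mx r r) *m (Wi *m V^t* *m Dg) =
            Sig *m (Dg *m V *m (Wi *m diag_mx (row_mx r r) *m Wi) *m V^t* *m Dg).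
    by rewrite !mulmxA.
  have -> : Wi *m diag_mx (row_mx r r) *m Wi = 1%:M.
    rewrite /Wi !diag_row_mul.
    have -> : \row_k ((\row_k0 (w 0 k0 * r 0 k0)) 0 k * w 0 k) = const_mx 1.
      by apply/rowP => k; rewrite !mxE sqrt_id.
    by rewrite row_mx_const diag_const_mx.
  rewrite mulmx1 -[Dg *m V *m V^t*]mulmxA hVV mulmx1 /Dg diag_row_mul SigE.
  rewrite diag_row_mul; congr (diag_mx (row_mx _ _)).
    by apply/rowP => k; rewrite !mxE mul1r sqrt_inv2.
  by apply/rowP => k; rewrite !mxE mulN1r sqrt_inv2.
Qed.

End Assemble.
Section Conc.
Variable R : realType.
Local Notation C := (R[i]).
Variables (N M : nat) (c : nat -> R) (Ls v L : R).

Lemma GammaE : Gamma_mx N = @Gam C N. Proof. by []. Qed.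
Lemma SigmaE : Sigma_mx N = @Sig C N. Proof. by []. Qed.
Lemma mxHE m n (A : 'M[C]_(m, n)) : mxH A = A^t*.
Proof. by rewrite /mxH /mxconj map_trmx. Qed.

Lemma conj_iR (x : R) : conjC ('i * x%:C)%C = - ('i * x%:C)%C :> C.
Proof.
apply/eqP; rewrite eq_complex /=.
by rewrite !(mul0r, mulr0, mul1r, subr0, add0r, oppr0, eqxx).
Qed.

Local Notation s := (sigma_mx N M c Ls v L).

Lemma s_cj i j : conjC (s i j) = - s i j.
Proof. rewrite !mxE; case: eqP => _; first by rewrite rmorph0 oppr0. exact: conj_iR. Qed.

Lemma s_anti i j : s j i = - s i j.
Proof.
rewrite !mxE eq_sym; case: eqP => _; first by rewrite oppr0.
rewrite -mulrN -rmorphN /=; congr (_ * (_ %:C)%C).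
rewrite (mulrC (j.+1%:R)) (mulrC (un M c Ls v L j.+1)) addnC.
by rewrite -[X in _ / (_ * X)]opprB mulrN invrN mulrN.
Qed.


Lemma ctE m n (A : 'M[C]_(m, n)) i j : (A^t*) i j = conjC (A j i).
Proof. by rewrite !mxE. Qed.

Lemma s_ct : s^t* = s.
Proof. by apply/matrixP => i j; rewrite ctE s_cj s_anti opprK. Qed.

Lemma s_cjm : cj s = - s.
Proof. by apply/matrixP => i j; rewrite [LHS]mxE s_cj [RHS]mxE. Qed.

Lemma ctD m n (A B : 'M[C]_(m, n)) : (A + B)^t* = A^t* + B^t*.
Proof. by apply/matrixP => i j; rewrite !mxE rmorphD. Qed.

Lemma Sig_cj : cj (@Sig C N) = @Sig C N.
Proof.
rewrite SigE map_diag_mx map_row_mx; congr (diag_mx (row_mx _ _)).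
  by apply/rowP => k; rewrite !mxE rmorph1.
by apply/rowP => k; rewrite !mxE rmorphN1.
Qed.

Lemma Sig_ct : (@Sig C N)^t* = @Sig C N.
Proof. by rewrite SigE tr_diag_mx -SigE Sig_cj. Qed.

Lemma GSig : @Gam C N *m @Sig C N *m @Gam C N = - @Sig C N.
Proof.
rewrite SigE Gam_diag -diag_mxN opp_row_mx; congr (diag_mx (row_mx _ _)).
  by apply/rowP => k; rewrite !mxE.
by apply/rowP => k; rewrite !mxE opprK.
Qed.

Local Notation Rm := (R_mx N M c Ls v L).

Lemma Rm_ct : Rm^t* = Rm.
Proof.
rewrite /R_mx SigmaE ctD ctN Sig_ct tr_block_mx map_block_mx s_ct.
by [].
Qed.

Lemma Rm_G : @Gam C N *m cj Rm *m @Gam C N = - Rm.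
Proof.
rewrite /R_mx SigmaE cjD cjN Sig_cj map_block_mx s_cjm -opp_block_mx opprK.
rewrite mulmxDr mulmxDl GSig Gam_blk.
by rewrite opprD opprK.
Qed.

Lemma ltC0 (x : R) : (0 : C) < (x%:C)%C -> 0 < x.
Proof. by rewrite ltcE /= => /andP[]. Qed.

Local Notation r := (\row_(i < N) ((((i : nat).+1%:R * un M c Ls v L (i : nat).+1
                           * epsn M c Ls v L (i : nat).+1)%:C)%C : C)).

Lemma Om_facts : posdef (Omega_mx N M c Ls v L) ->
  (forall i, 0 < r 0 i) /\
  Omega_mx N M c Ls v L = block_mx (diag_mx r) 0 0 (diag_mx r).
Proof.
move=> [_ hpd].
have rpos : forall i : 'I_N, 0 < (i : nat).+1%:R * un M c Ls v L (i : nat).+1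
                           * epsn M c Ls v L (i : nat).+1.
  move=> i; set k := lshift N i.
  pose x : 'cV[C]_(N + N) := delta_mx k 0.
  have x0 : x != 0.
    apply/negP => /eqP /matrixP /(_ k 0); rewrite !mxE !eqxx /= => /eqP.
    by rewrite oner_eq0.
  have := hpd x x0; rewrite mxHE.
  have -> : x^t* = delta_mx 0 k by rewrite /x trmx_delta map_delta_mx.
  rewrite -rowE -colE [X in 0 < X]mxE [X in 0 < X]mxE.
  rewrite /Omega_mx block_mxEul /rho_mx mxE eqxx mulr1n mxE.
  exact: ltC0.
have eps1 : forall i : 'I_N, epsn M c Ls v L (i : nat).+1 = 1.
  by move=> i; move: (rpos i); rewrite /epsn; case: ifP => // _; rewrite mulr0 ltxx.
split.
  by move=> i; rewrite mxE ltcR.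
have xi0 : xi_mx N M c Ls v L = 0.
  apply/matrixP => a b; rewrite /xi_mx !mxE eps1 subrr mulr0 oppr0 rmorph0.
  by rewrite mul0rn.
by rewrite /Omega_mx xi0.
Qed.

End Conc.

Theorem lemma4 (R : realType) (N : nat) (v L Ls : R) (M : nat) (c : nat -> R) :
  (0 < N)%N -> `|v| < 1 -> 0 < L -> 0 <= Ls -> (0 < M)%N -> c 1%N = 1 ->
  (forall n : nat, (1 <= n <= N)%N -> discr M c Ls v L n != 0) ->
  R_mx N M c Ls v L \in unitmx ->
  posdef (Omega_mx N M c Ls v L) ->
  exists T : 'M[R[i]]_(N + N), normal_mode_transformation N M c Ls v L T.
Proof.
move=> _ _ _ _ _ _ _ hRU hpd.
have [rpos hOm] := @Om_facts R N M c Ls v L hpd.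
have [T [mu [hmu [h1 h2 h3]]]] :=
  @assemble (R[i]) N (R_mx N M c Ls v L) _ rpos (@Rm_ct R N M c Ls v L) hRU (@Rm_G R N M c Ls v L).
exists T; split.
- by rewrite mxHE.
- exact: h2.
- exists (fun i => complex.Re (mu 0 i)); split.
    by move=> i; have := hmu i; rewrite ltcE /= => /andP[].
  rewrite mxHE /D_mx hOm SigmaE h3; congr (diag_mx (row_mx _ _)).
    by apply/rowP => k; rewrite !mxE RRe_real // gtr0_real.
  by apply/rowP => k; rewrite !mxE rmorphN /= RRe_real // gtr0_real.
Qed.
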